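(* Let $(V,\|\cdot\|,V_+)$ be a normal ordered vector space and let $d=d_V$. Then $d$ is a proper gauge on $V$ (so $(V,d)$ is a gauged space), and the normed ordered vector space induced by $d$ is exactly $(V,\|\cdot\|,V_+)$; that is, $V_+=\{x\in V:\ d(-x)=0\}$ and $\|x\|=\max\{d(x),d(-x)\}$ for all $x\in V$.
   Context: A normed ordered vector space $(V,\|\cdot\|,V_+)$ is a real normed vector space $V$ together with a closed proper cone $V_+$ (i.e. $V_+$ is closed under addition and multiplication by nonnegative scalars, and $V_+\cap(-V_+)=\{0\}$); write $x\le y$ iff $y-x\in V_+$. It is called normal if $x\le y\le z$ implies $\|y\|\le\max\{\|x\|,\|z\|\}$. A gauge on a real vector space $V$ is a map $\nu:V\to[0,\infty)$ with $\nu(x+y)\le\nu(x)+\nu(y)$ and $\nu(tx)=t\nu(x)$ for all $x,y\in V$, $t>0$; its conjugate is $\overline{\nu}(x)=\nu(-x)$. A gauge is proper if for every $x\neq 0$, $\nu(x)\ne 0$ or $\overline{\nu}(x)\neq 0$; a gauged space is a pair $(V,\nu)$ with $\nu$ a proper gauge. The normed ordered vector space induced by a gauge $\nu$ is $(V,\|\cdot\|_\nu,V_{+,\nu})$ with $\|x\|_\nu=\max\{\nu(x),\overline{\nu}(x)\}$ and $V_{+,\nu}=\ker\overline{\nu}=\{x:\nu(-x)=0\}$. For a normed ordered vector space, $d_V(x)=\inf\{\|x+p\|:p\in V_+\}$ (the distance from $x$ to $-V_+$). *)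

(* Defs.v *)
From Stdlib Require Import Reals ClassicalEpsilon.
Open Scope R_scope.

Record NormedSpace := {
  carrier :> Type;
  vzero : carrier;
  vadd : carrier -> carrier -> carrier;
  vopp : carrier -> carrier;
  vscal : R -> carrier -> carrier;
  vnorm : carrier -> R;
  vaddA : forall x y z, vadd x (vadd y z) = vadd (vadd x y) z;
  vaddC : forall x y, vadd x y = vadd y x;
  vadd0 : forall x, vadd x vzero = x;
  vaddN : forall x, vadd x (vopp x) = vzero;
  vscalA : forall a b x, vscal a (vscal b x) = vscal (a * b) x;
  vscal1 : forall x, vscal 1 x = x;
  vscalDr : forall a x y, vscal a (vadd x y) = vadd (vscal a x) (vscal a y);
  vscalDl : forall a b x, vscal (a + b) x = vadd (vscal a x) (vscal b x);
  vnorm_eq0 : forall x, vnorm x = 0 -> x = vzero;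
  vnorm_scal : forall a x, vnorm (vscal a x) = Rabs a * vnorm x;
  vnorm_triangle : forall x y, vnorm (vadd x y) <= vnorm x + vnorm y
}.

Arguments vzero {n}.
Arguments vadd {n}.
Arguments vopp {n}.
Arguments vscal {n}.
Arguments vnorm {n}.

Definition norm_closed (V : NormedSpace) (S : V -> Prop) : Prop :=
  forall (u : nat -> V) (x : V), (forall n, S (u n)) ->
    Un_cv (fun n => vnorm (vadd (u n) (vopp x))) 0 -> S x.

Definition closed_proper_cone (V : NormedSpace) (Vp : V -> Prop) : Prop :=
  (exists x, Vp x) /\
  (forall x y, Vp x -> Vp y -> Vp (vadd x y)) /\
  (forall (t : R) x, 0 <= t -> Vp x -> Vp (vscal t x)) /\
  (forall x, Vp x -> Vp (vopp x) -> x = vzero) /\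
  norm_closed V Vp.

Definition cone_le (V : NormedSpace) (Vp : V -> Prop) (x y : V) : Prop :=
  Vp (vadd y (vopp x)).

Definition normal_cone (V : NormedSpace) (Vp : V -> Prop) : Prop :=
  forall x y z, cone_le V Vp x y -> cone_le V Vp y z ->
    vnorm y <= Rmax (vnorm x) (vnorm z).

Definition is_gauge (V : NormedSpace) (nu : V -> R) : Prop :=
  (forall x, 0 <= nu x) /\
  (forall x y, nu (vadd x y) <= nu x + nu y) /\
  (forall (t : R) x, 0 < t -> nu (vscal t x) = t * nu x).

Definition conj_gauge (V : NormedSpace) (nu : V -> R) (x : V) : R := nu (vopp x).

Definition proper_gauge (V : NormedSpace) (nu : V -> R) : Prop :=
  is_gauge V nu /\
  forall x, x <> vzero -> nu x <> 0 \/ conj_gauge V nu x <> 0.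

Definition gauge_norm (V : NormedSpace) (nu : V -> R) (x : V) : R :=
  Rmax (nu x) (conj_gauge V nu x).
Definition gauge_cone (V : NormedSpace) (nu : V -> R) (x : V) : Prop :=
  conj_gauge V nu x = 0.

(* infimum of a set of reals (greatest lower bound; 0 if none exists) *)
Definition is_glb (E : R -> Prop) (m : R) : Prop :=
  (forall r, E r -> m <= r) /\ (forall b, (forall r, E r -> b <= r) -> b <= m).

Definition Rinf (E : R -> Prop) : R :=
  epsilon (inhabits 0) (fun m => is_glb E m).

Definition dV (V : NormedSpace) (Vp : V -> Prop) (x : V) : R :=
  Rinf (fun r => exists p, Vp p /\ r = vnorm (vadd x p)).

(* Main.v *)
Require Import Defs.
From Stdlib Require Import Reals Lra Lia Classical ClassicalEpsilon.
Open Scope R_scope.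

Section S.
Variable V : NormedSpace.

Lemma add0l (x : V) : vadd vzero x = x.
Proof. rewrite vaddC; apply vadd0. Qed.

Lemma addNl (x : V) : vadd (vopp x) x = vzero.
Proof. rewrite vaddC; apply vaddN. Qed.

Lemma add_cancel (a b c : V) : vadd a b = vadd a c -> b = c.
Proof.
  intro H. rewrite <- (add0l b), <- (add0l c), <- (addNl a), <- !vaddA, H; reflexivity.
Qed.

Lemma opp_unique (x y : V) : vadd x y = vzero -> y = vopp x.
Proof. intro H. apply (add_cancel x). rewrite H, vaddN. reflexivity. Qed.

Lemma scal0 (x : V) : vscal 0 x = vzero.
Proof.
  apply (add_cancel (vscal 0 x)). rewrite vadd0, <- vscalDl. f_equal; ring.
Qed.

Lemma scalN1 (x : V) : vscal (-1) x = vopp x.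
Proof.
  apply opp_unique. rewrite <- (vscal1 _ x) at 1. rewrite <- vscalDl.
  replace (1 + -1) with 0 by ring. apply scal0.
Qed.

Lemma oppK (x : V) : vopp (vopp x) = x.
Proof. symmetry. apply opp_unique. apply addNl. Qed.

Lemma oppD (x y : V) : vopp (vadd x y) = vadd (vopp x) (vopp y).
Proof.
  symmetry. apply opp_unique.
  rewrite (vaddC _ (vopp x) (vopp y)), vaddA, <- (vaddA _ x y), vaddN, vadd0, vaddN.
  reflexivity.
Qed.

Lemma norm0 : vnorm (@vzero V) = 0.
Proof.
  rewrite <- (scal0 vzero), vnorm_scal, Rabs_R0. ring.
Qed.

Lemma norm_opp (x : V) : vnorm (vopp x) = vnorm x.
Proof. rewrite <- scalN1, vnorm_scal. replace (Rabs (-1)) with 1 by (rewrite Rabs_left; lra). ring. Qed.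

Lemma norm_ge0 (x : V) : 0 <= vnorm x.
Proof.
  assert (H := vnorm_triangle _ x (vopp x)). rewrite vaddN, norm0, norm_opp in H. lra.
Qed.

End S.

Lemma glb_ex (E : R -> Prop) : (exists r, E r) -> (forall r, E r -> 0 <= r) ->
  exists m, is_glb E m.
Proof.
  intros [r Hr] H.
  destruct (completeness (fun y => E (- y))) as [m [Hm1 Hm2]].
  - exists 0. intros y Hy. apply H in Hy. lra.
  - exists (- r). rewrite Ropp_involutive. exact Hr.
  - exists (- m). split.
    + intros s Hs. assert (s = - - s) by ring. rewrite H0 in Hs. apply Hm1 in Hs. lra.
    + intros b Hb. assert (m <= - b); [|lra]. apply Hm2. intros y Hy. apply Hb in Hy. lra.
Qed.

Lemma Rinf_spec (E : R -> Prop) : (exists r, E r) -> (forall r, E r -> 0 <= r) ->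
  is_glb E (Rinf E).
Proof.
  intros H1 H2. unfold Rinf. apply epsilon_spec. apply glb_ex; auto.
Qed.

Section D.
Variable V : NormedSpace.
Variable Vp : V -> Prop.
Hypothesis Hcone : closed_proper_cone V Vp.

Lemma cone0 : Vp vzero.
Proof.
  destruct Hcone as [[x Hx] [_ [Hs _]]]. rewrite <- (scal0 V x). apply Hs; auto; lra.
Qed.

Lemma dV_glb (x : V) : is_glb (fun r => exists p, Vp p /\ r = vnorm (vadd x p)) (dV V Vp x).
Proof.
  apply Rinf_spec.
  - exists (vnorm (vadd x vzero)). exists vzero. split; auto. apply cone0.
  - intros r [p [_ ->]]. apply norm_ge0.
Qed.

Lemma dV_le (x p : V) : Vp p -> dV V Vp x <= vnorm (vadd x p).
Proof. intro Hp. apply (proj1 (dV_glb x)). eauto. Qed.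

Lemma dV_ge0 (x : V) : 0 <= dV V Vp x.
Proof. apply (proj2 (dV_glb x)). intros r [p [_ ->]]. apply norm_ge0. Qed.

Lemma dV_approx (x : V) (eps : R) : 0 < eps ->
  exists p, Vp p /\ vnorm (vadd x p) < dV V Vp x + eps.
Proof.
  intro He. apply NNPP. intro Hn.
  assert (dV V Vp x + eps <= dV V Vp x); [|lra].
  apply (proj2 (dV_glb x)). intros r [p [Hp ->]].
  apply Rnot_lt_le. intro Hl. apply Hn. eauto.
Qed.

Lemma le_eps (a b : R) : (forall eps, 0 < eps -> a <= b + eps) -> a <= b.
Proof.
  intro H. apply Rnot_lt_le. intro Hl. specialize (H ((a - b)/2)). lra.
Qed.

Lemma dV_sub (x y : V) : dV V Vp (vadd x y) <= dV V Vp x + dV V Vp y.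
Proof.
  apply le_eps. intros eps He.
  destruct (dV_approx x (eps/2)) as [p [Hp H1]]; [lra|].
  destruct (dV_approx y (eps/2)) as [q [Hq H2]]; [lra|].
  destruct Hcone as [_ [Ha _]].
  assert (H := dV_le (vadd x y) (vadd p q) (Ha _ _ Hp Hq)).
  assert (E : vadd (vadd x y) (vadd p q) = vadd (vadd x p) (vadd y q)).
  { rewrite !vaddA. f_equal. rewrite <- !vaddA. f_equal. apply vaddC. }
  rewrite E in H. assert (H3 := vnorm_triangle _ (vadd x p) (vadd y q)). lra.
Qed.

Lemma dV_hom_le (t : R) (x : V) : 0 < t -> dV V Vp (vscal t x) <= t * dV V Vp x.
Proof.
  intro Ht. apply le_eps. intros eps He.
  destruct (dV_approx x (eps / t)) as [p [Hp H1]].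
  { apply Rdiv_lt_0_compat; lra. }
  destruct Hcone as [_ [_ [Hs _]]].
  assert (Hp' : Vp (vscal t p)) by (apply Hs; auto; lra).
  assert (H := dV_le (vscal t x) _ Hp').
  rewrite <- vscalDr, vnorm_scal, Rabs_right in H by lra.
  apply Rmult_lt_compat_l with (r := t) in H1; [|lra].
  replace (t * (dV V Vp x + eps / t)) with (t * dV V Vp x + eps) in H1 by (field; lra).
  lra.
Qed.

Lemma dV_hom (t : R) (x : V) : 0 < t -> dV V Vp (vscal t x) = t * dV V Vp x.
Proof.
  intro Ht. apply Rle_antisym. apply dV_hom_le; auto.
  assert (H := dV_hom_le (/ t) (vscal t x)).
  rewrite vscalA, Rinv_l, vscal1 in H by lra.
  assert (H' : dV V Vp x <= / t * dV V Vp (vscal t x)) by (apply H; apply Rinv_0_lt_compat; lra).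
  apply Rmult_le_compat_l with (r := t) in H'; [|lra].
  rewrite <- Rmult_assoc, Rinv_r, Rmult_1_l in H' by lra. exact H'.
Qed.

End D.

Theorem proposition2p7 (V : NormedSpace) (Vp : V -> Prop)
  (Hcone : closed_proper_cone V Vp) (Hnormal : normal_cone V Vp) :
  proper_gauge V (dV V Vp) /\
  (forall x, Vp x <-> gauge_cone V (dV V Vp) x) /\
  (forall x, vnorm x = gauge_norm V (dV V Vp) x).
Proof.
  assert (Hnorm : forall x, vnorm x = gauge_norm V (dV V Vp) x).
  { intro x. unfold gauge_norm, conj_gauge. apply Rle_antisym.
    - apply le_eps. intros eps He.
      destruct (dV_approx V Vp Hcone x eps He) as [p [Hp H1]].
      destruct (dV_approx V Vp Hcone (vopp x) eps He) as [q [Hq H2]].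
      assert (Hn := Hnormal (vadd x (vopp q)) x (vadd x p)).
      unfold cone_le in Hn.
      rewrite oppD, oppK, vaddA, vaddN, add0l in Hn.
      rewrite (vaddC _ x p), <- vaddA, vaddN, vadd0 in Hn.
      specialize (Hn Hq Hp).
      assert (E : vnorm (vadd x (vopp q)) = vnorm (vadd (vopp x) q)).
      { rewrite <- norm_opp, oppD, oppK. reflexivity. }
      rewrite E in Hn.
      apply Rle_trans with (1 := Hn). apply Rmax_lub.
      + assert (Hr := Rmax_r (dV V Vp x) (dV V Vp (vopp x))). lra.
      + assert (Hr := Rmax_l (dV V Vp x) (dV V Vp (vopp x))). rewrite vaddC. lra.
    - assert (H1 := dV_le V Vp Hcone x vzero (cone0 V Vp Hcone)).
      assert (H2 := dV_le V Vp Hcone (vopp x) vzero (cone0 V Vp Hcone)).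
      rewrite !vadd0, norm_opp in *. apply Rmax_lub; auto. }
  split; [|split; [|exact Hnorm]].
  - split.
    + split; [apply dV_ge0; auto|]. split; [apply dV_sub; auto|].
      intros; apply dV_hom; auto.
    + intros x Hx. apply NNPP. intro Hn. apply Hx. apply vnorm_eq0.
      rewrite Hnorm. unfold gauge_norm.
      apply not_or_and in Hn. destruct Hn as [H1 H2].
      apply NNPP in H1. apply NNPP in H2. rewrite H1, H2. apply Rmax_left; lra.
  - intro x. unfold gauge_cone, conj_gauge. split.
    + intro Hx. apply Rle_antisym; [|apply dV_ge0; auto].
      assert (H := dV_le V Vp Hcone (vopp x) x Hx). rewrite addNl, norm0 in H. exact H.
    + intro H0. pose proof Hcone as [_ [_ [_ [_ Hcl]]]].
      assert (Hs : forall n:nat, exists p, Vp p /\ vnorm (vadd (vopp x) p) < / INR (S n)).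
      { intro n. assert (Hpos : 0 < / INR (S n)).
        { apply Rinv_0_lt_compat. apply lt_0_INR. lia. }
        destruct (dV_approx V Vp Hcone (vopp x) _ Hpos) as [p [Hp Hl]].
        exists p. split; auto. lra. }
      destruct (choice _ Hs) as [u Hu].
      apply (Hcl u x); [intro n; apply (Hu n)|].
      intros eps He. destruct (archimed_cor1 eps He) as [N [HN1 HN2]].
      exists N. intros n Hn. unfold R_dist. rewrite Rminus_0_r.
      rewrite Rabs_right by (apply Rle_ge, norm_ge0).
      rewrite vaddC. destruct (Hu n) as [_ Hl].
      apply Rlt_trans with (/ INR (S n)); auto.
      apply Rle_lt_trans with (/ INR N); auto.
      apply Rinv_le_contravar. apply lt_0_INR; lia. apply le_INR; lia.
Qed.
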